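(* Let $X\subset\mathbb{R}^n$ be a finite set of points, let $\mathcal{O}\subset\mathcal{T}_n$ be an order ideal, and let $G\subset\mathbb{R}[x_1,\ldots,x_n]$ be an $\mathcal{O}$-border basis of the vanishing ideal $\mathcal{I}(X)=\{g\in\mathbb{R}[x_1,\ldots,x_n]: g(\mathbf{x})=0\ \forall \mathbf{x}\in X\}$. Then: (1) every $o\in\mathcal{O}\setminus\{1\}$ satisfies $\|o\|_{\mathrm{gw},X}\neq 0$; (2) every border term $b\in\partial\mathcal{O}$ satisfies $\|b\|_{\mathrm{gw},X}\neq 0$; (3) every $g\in G$ satisfies $\|g\|_{\mathrm{gw},X}\neq 0$.
   Context: $\mathcal{T}_n$ is the set of terms of $\mathbb{R}[x_1,\ldots,x_n]$. An order ideal is a finite $\mathcal{O}\subset\mathcal{T}_n$ closed under taking divisors; its border is $\partial\mathcal{O}=(\bigcup_k x_k\mathcal{O})\setminus\mathcal{O}$. An $\mathcal{O}$-border prebasis is a set of polynomials of the form $b-\sum_{o\in\mathcal{O}}c_o o$ with $b\in\partial\mathcal{O}$, $c_o\in\mathbb{R}$ (one for each $b$); it is an $\mathcal{O}$-border basis of an ideal $I$ if it lies in $I$ and $\mathcal{O}$ is a basis of the $\mathbb{R}$-vector space $\mathbb{R}[x_1,\ldots,x_n]/I$. For $X=\{\mathbf{x}_1,\ldots,\mathbf{x}_N\}$, the gradient norm of a polynomial $g$ is $\|g\|_{g,X}=\sqrt{\sum_{\mathbf{x}\in X}\|\nabla g(\mathbf{x})\|^2}/Z$ with $Z=\sqrt{\sum_{k=1}^n\deg_k(g)^2}$,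 and $\|g\|_{g,X}:=0$ if $g$ is constant. For $g=\sum_i c_it_i$ ($c_i\in\mathbb{R}$, distinct terms $t_i$), the gradient-weighted norm is $\|g\|_{\mathrm{gw},X}=\sqrt{\sum_i c_i^2\|t_i\|_{g,X}^2}$. *)

(* Defs.v *)
From HB Require Import structures.
From mathcomp Require Import all_boot all_order all_algebra.
From mathcomp Require Import Rstruct.
From mathcomp Require Import mpoly.
Set Implicit Arguments. Unset Strict Implicit. Unset Printing Implicit Defensive.
Import Order.TTheory GRing.Theory Num.Theory.
Local Open Scope ring_scope.

Notation RR := Rdefinitions.R.

(* Terms of R[x_1..x_n] are identified with their exponent vectors
   m : 'X_{1..n}; the term itself is the polynomial 'X_[m]. *)

Definition order_ideal (n : nat) (O : seq 'X_{1..n}) : Prop :=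
  forall o t : 'X_{1..n}, o \in O -> (t <= o)%MM -> t \in O.

Definition in_border (n : nat) (O : seq 'X_{1..n}) (b : 'X_{1..n}) : Prop :=
  b \notin O /\ exists (k : 'I_n) (o : 'X_{1..n}), o \in O /\ b = (o + U_(k))%MM.

Definition evalpt (n : nat) (x : 'rV[RR]_n) (g : {mpoly RR[n]}) : RR :=
  g.@[fun i => x ord0 i].

Definition vanishing (n : nat) (X : seq 'rV[RR]_n) (g : {mpoly RR[n]}) : Prop :=
  forall x, x \in X -> evalpt x g = 0.

(* An O-border prebasis, given as a family indexed by the border terms:
   for each border term b, g b = b - sum_{o in O} c_o o. *)
Definition border_prebasis (n : nat) (O : seq 'X_{1..n})
    (g : 'X_{1..n} -> {mpoly RR[n]}) : Prop :=
  forall b, in_border O b ->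
    exists c : 'X_{1..n} -> RR, g b = 'X_[b] - \sum_(o <- O) c o *: 'X_[o].

Definition quotient_basis (n : nat) (I : {mpoly RR[n]} -> Prop)
    (O : seq 'X_{1..n}) : Prop :=
  (forall p : {mpoly RR[n]}, exists c : 'X_{1..n} -> RR,
      I (p - \sum_(o <- O) c o *: 'X_[o])) /\
  (forall c : 'X_{1..n} -> RR, I (\sum_(o <- O) c o *: 'X_[o]) ->
      forall o, o \in O -> c o = 0).

Definition border_basis_of_vanishing (n : nat) (X : seq 'rV[RR]_n)
    (O : seq 'X_{1..n}) (g : 'X_{1..n} -> {mpoly RR[n]}) : Prop :=
  border_prebasis O g /\
  (forall b, in_border O b -> vanishing X (g b)) /\
  quotient_basis (vanishing X) O.

Definition degk (n : nat) (k : 'I_n) (g : {mpoly RR[n]}) : nat :=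
  \max_(m <- msupp g) m k.

Definition is_constant (n : nat) (g : {mpoly RR[n]}) : bool :=
  g == (g@_0%MM)%:MP.

Definition grad_norm (n : nat) (X : seq 'rV[RR]_n) (g : {mpoly RR[n]}) : RR :=
  if is_constant g then 0 else
  Num.sqrt (\sum_(x <- X) \sum_(k < n) (evalpt x (g^`M(k))) ^+ 2)
  / Num.sqrt (\sum_(k < n) ((degk k g)%:R) ^+ 2).

Definition gw_norm (n : nat) (X : seq 'rV[RR]_n) (g : {mpoly RR[n]}) : RR :=
  Num.sqrt (\sum_(m <- msupp g) (g@_m) ^+ 2 * (grad_norm X 'X_[m]) ^+ 2).

(* Main.v *)
Require Import Defs.
From HB Require Import structures.
From mathcomp Require Import all_boot all_order all_algebra.
From mathcomp Require Import Rstruct.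
From mathcomp Require Import mpoly.
Import Order.TTheory GRing.Theory Num.Theory.
Local Open Scope ring_scope.

Lemma pos_sum (I : eqType) (r : seq I) (F : I -> RR) j :
  (forall i, 0 <= F i) -> j \in r -> 0 < F j -> 0 < \sum_(i <- r) F i.
Proof.
move=> F0 jr Fj; rewrite lt_def sumr_ge0 // andbT.
rewrite psumr_eq0 //; apply/negP => /allP /(_ j jr) /= /eqP Fj0.
by rewrite Fj0 ltxx in Fj.
Qed.

Lemma nonvanish n (X : seq 'rV[RR]_n) (O : seq 'X_{1..n}) m :
  quotient_basis (vanishing X) O -> uniq O -> m \in O ->
  exists2 x, x \in X & evalpt x 'X_[m] != 0.
Proof.
move=> [_ Hq] uO mO.
case: (boolP [exists i : 'I_(size X), evalpt (nth 0 X i) 'X_[m] != 0]).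
  move=> /existsP [i Hi]; exists (nth 0 X i) => //; exact: mem_nth.
move=> /existsPn Hall.
pose c := fun o : 'X_{1..n} => ((o == m)%:R : RR).
have E : \sum_(o <- O) c o *: 'X_[o] = 'X_[m] :> {mpoly RR[n]}.
  rewrite (bigD1_seq m) //= /c eqxx scale1r big1 ?addr0 //.
  by move=> o /negbTE ->; rewrite scale0r.
have := Hq c; rewrite E => H.
have : c m = 0.
  apply: H => // x xX.
  have /(nthP 0) [i ilt <-] := xX.
  by have := Hall (Ordinal ilt); rewrite negbK => /eqP.
by rewrite /c eqxx; move/eqP; rewrite oner_eq0.
Qed.

Lemma mX_ne0 n (m : 'X_{1..n}) : 'X_[m] != 0 :> {mpoly RR[n]}.
Proof.
apply/negP => /eqP H.
have := @mcoeffX _ RR m m; rewrite H mcoeff0 eqxx => /eqP; by rewrite eq_sym oner_eq0.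
Qed.

Lemma grad_pos n (X : seq 'rV[RR]_n) (m : 'X_{1..n}) (k : 'I_n) x :
  (0 < m k)%N -> x \in X -> evalpt x 'X_[m - U_(k)] != 0 ->
  0 < grad_norm X 'X_[m].
Proof.
move=> mk xX ev.
have m0 : m != 0%MM.
  by apply/negP => /eqP H; move: mk; rewrite H mnm0E.
have nc : is_constant 'X_[m] = false.
  rewrite /is_constant mcoeffX eq_sym (negbTE m0) mpolyC0.
  by apply/negbTE; rewrite eq_sym; apply: mX_ne0.
rewrite /grad_norm nc; apply: divr_gt0; rewrite sqrtr_gt0.
- apply: (@pos_sum _ X _ x) => //.
    by move=> i; apply: sumr_ge0 => j _; rewrite sqr_ge0.
  apply: (@pos_sum _ (index_enum 'I_n) _ k).
  + by move=> j; rewrite sqr_ge0.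
  + by rewrite mem_index_enum.
  rewrite lt_def sqr_ge0 andbT sqrf_eq0.
  rewrite /evalpt mderivX mevalZ mulf_eq0 negb_or pnatr_eq0 -lt0n mk /=.
  exact: ev.
- apply: (@pos_sum _ (index_enum 'I_n) _ k).
  + by move=> j; rewrite sqr_ge0.
  + by rewrite mem_index_enum.
  by rewrite /degk msuppX big_seq1 exprn_gt0 // ltr0n.
Qed.

Lemma gw_ne0 n (X : seq 'rV[RR]_n) (p : {mpoly RR[n]}) m :
  p@_m != 0 -> 0 < grad_norm X 'X_[m] -> gw_norm X p != 0.
Proof.
move=> pm g; rewrite /gw_norm sqrtr_eq0 -ltNge.
apply: (@pos_sum _ _ _ m).
- by move=> i; rewrite mulr_ge0 // sqr_ge0.
- by move: pm; rewrite mcoeff_eq0 negbK.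
rewrite mulr_gt0 //; rewrite lt_def sqr_ge0 andbT sqrf_eq0 ?pm //; by rewrite gt_eqF.
Qed.

Lemma border_pos n (X : seq 'rV[RR]_n) (O : seq 'X_{1..n}) b :
  quotient_basis (vanishing X) O -> uniq O -> in_border O b ->
  0 < grad_norm X 'X_[b].
Proof.
move=> qb uO [_ [k [o [oO ->]]]].
have [x xX ev] := @nonvanish _ X O o qb uO oO.
apply: (@grad_pos _ _ _ k x) => //.
  by rewrite mnmDE mnm1E eqxx addn1.
by rewrite addmK.
Qed.

Lemma coef_sum n (O : seq 'X_{1..n}) (c : 'X_{1..n} -> RR) b :
  b \notin O -> (\sum_(o <- O) c o *: 'X_[o] : {mpoly RR[n]})@_b = 0.
Proof.
elim: O => [|a O IH]; first by rewrite big_nil mcoeff0.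
rewrite inE negb_or => /andP [ba bO].
by rewrite big_cons mcoeffD mcoeffZ mcoeffX eq_sym (negbTE ba) mulr0 add0r IH.
Qed.

Theorem mainTheorem2 (n : nat) (X : seq 'rV[RR]_n) (O : seq 'X_{1..n})
    (G : 'X_{1..n} -> {mpoly RR[n]}) :
  uniq X -> uniq O -> order_ideal O ->
  border_basis_of_vanishing X O G ->
  (forall o, o \in O -> o != 0%MM -> gw_norm X 'X_[o] != 0) /\
  (forall b, in_border O b -> gw_norm X 'X_[b] != 0) /\
  (forall b, in_border O b -> gw_norm X (G b) != 0).
Proof.
move=> uX uO oi [pb [_ qb]]; split; [|split].
- move=> o oO o0.
  have [k ok] : exists k, (0 < o k)%N.
    apply/existsP; apply: contraR o0 => /existsPn H.
    by apply/eqP/mnmP => i; rewrite mnm0E; have := H i; rewrite lt0n negbK => /eqP.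
  have [x xX ev] := @nonvanish _ X O (o - U_(k))%MM qb uO (oi _ _ oO (lem_subr o U_(k))).
  apply: (@gw_ne0 _ _ _ o); first by rewrite mcoeffX eqxx oner_eq0.
  exact: (@grad_pos _ X o k x ok xX ev).
- move=> b bb; apply: (@gw_ne0 _ _ _ b); first by rewrite mcoeffX eqxx oner_eq0.
  exact: border_pos bb.
- move=> b bb; apply: (@gw_ne0 _ _ _ b); last exact: border_pos bb.
  have [c ->] := pb b bb.
  by rewrite mcoeffB mcoeffX eqxx coef_sum ?subr0 ?oner_eq0 //; case: bb.
Qed.
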